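(* Let $G$ be a finite metacyclic group of even order. Then $G$ has a cyclic normal subgroup $N$ such that $G/N$ is cyclic of even order. If moreover $G$ is split metacyclic, then $G\cong C_m\rtimes C_n$ for some $m,n$ with $n$ even.
   Context: A finite group $G$ is metacyclic if it has a cyclic normal subgroup $N$ with $G/N$ cyclic. $G$ is split metacyclic if $G\cong C_m\rtimes C_n$ for some $m,n$, where $C_k$ is the cyclic group of order $k$. *)

(* Defs.v *)
From mathcomp Require Import all_boot all_fingroup all_solvable.
Set Implicit Arguments. Unset Strict Implicit. Unset Printing Implicit Defensive.
Local Open Scope group_scope.

Definition split_metacyclic (gT : finGroupType) (G : {set gT}) : Prop :=
  exists K H : {group gT}, [/\ K ><| H = G, cyclic K & cyclic H].

(* Main.v *)
Require Import Defs.
From mathcomp Require Import all_boot all_fingroup all_solvable.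
Set Implicit Arguments. Unset Strict Implicit. Unset Printing Implicit Defensive.
Local Open Scope group_scope.

Lemma cent_coprime_aut (gT : finGroupType) (K H : {group gT}) :
  cyclic K -> H \subset 'N(K) -> coprime #|H| (totient #|K|) -> H \subset 'C(K).
Proof.
move=> cK nKH co.
have c1 : #|conj_aut K @* H| = 1%N.
  apply/eqP; rewrite -dvdn1 -(eqnP co) dvdn_gcd dvdn_morphim /=.
  by rewrite -(card_Aut_cyclic cK) cardSg // Aut_conj_aut.
have e : conj_aut K @* H :==: 1 by rewrite trivg_card1 c1.
have : conj_aut K @* H \subset (1 : {set _}) by rewrite (eqP e).
by rewrite sub_morphim_pre // -ker_conj_aut.
Qed.

Lemma cyc2 (qT : finGroupType) (Q Z : {group qT}) :
  Z <| Q -> #|Z| = 2 -> cyclic (Q / Z) -> odd #|Q / Z| -> cyclic Q.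
Proof.
move=> nsZQ cZ cycQZ oddQZ.
have [sZQ nZQ] := andP nsZQ.
have cycZ : cyclic Z by apply: prime_cyclic; rewrite cZ.
have cZQ : Q \subset 'C(Z).
  by apply: cent_coprime_aut => //; rewrite cZ; apply: coprimen1.
have hall : Hall Q Z by rewrite /Hall sZQ /= -card_quotient // cZ coprime2n.
have [H /complP [tiZH defQ]] := splitsP (SchurZassenhaus_split hall nsZQ).
have sHQ : H \subset Q by rewrite -defQ mulG_subr.
have defsd : Z ><| H = Q by rewrite sdprodE // (subset_trans sHQ nZQ).
have defd : Z \x H = Q by rewrite dprodE // (subset_trans sHQ cZQ).
have isoH := sdprod_isog defsd.
have cycH : cyclic H by rewrite (isog_cyclic isoH).
by rewrite (cyclic_dprod defd) // cZ coprime2n (card_isog isoH).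
Qed.

Theorem lemma4p1 (gT : finGroupType) (G : {group gT})
    (hmeta : metacyclic G) (heven : 2 %| #|G|) :
  (exists N : {group gT}, [/\ cyclic N, N <| G, cyclic (G / N) & 2 %| #|G / N|])
  /\
  (split_metacyclic G ->
     exists K H : {group gT},
       [/\ K ><| H = G, cyclic K, cyclic H & 2 %| #|H|]).
Proof.
split.
  case/metacyclicP: hmeta => N [cycN nsNG cycGN].
  have [sNG nNG] := andP nsNG.
  case: (boolP (2 %| #|G / N|)) => [ev|oddGN]; first by exists N.
  rewrite dvdn2 negbK in oddGN.
  have evN : 2 %| #|N|.
    move: heven; rewrite -(Lagrange sNG) -card_quotient // Euclid_dvdM //.
    by move=> /orP[//|]; rewrite dvdn2 oddGN.
  have [y defN] := cyclicP cycN.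
  pose M := <[y ^+ 2]>%G.
  have sMN : M \subset N by rewrite defN cycleX.
  have oy : #[y] = #|N| by rewrite orderE -defN.
  have cM : #|M| = (#|N| %/ 2)%N by rewrite /= -orderE orderXdiv oy.
  have nsMG : M <| G by apply: char_normal_trans nsNG; rewrite sub_cyclic_char.
  have nMN : N \subset 'N(M) := subset_trans sNG (normal_norm nsMG).
  have cNM : #|N / M| = 2.
    rewrite card_quotient // -divgS // cM.
    have npos : (0 < #|N| %/ 2)%N by rewrite divn_gt0 // dvdn_leq.
    by rewrite -{1}(divnK evN) mulKn.
  exists M; split.
  - exact: cycle_cyclic.
  - exact: nsMG.
  - apply: (@cyc2 _ _ (N / M)%G); first exact: quotient_normal.
    + exact: cNM.
    + by rewrite (isog_cyclic (third_isog sMN nsMG nsNG)).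
    + by rewrite (card_isog (third_isog sMN nsMG nsNG)).
  - by rewrite -cNM cardSg // quotientS.
move=> [K [H [defG cycK cycH]]].
case: (boolP (2 %| #|H|)) => [ev|oddH]; first by exists K, H.
rewrite dvdn2 negbK in oddH.
have [nsKG sHG mulKH nKH tiKH] := sdprod_context defG.
have evK : 2 %| #|K|.
  move: heven; rewrite -(sdprod_card defG) Euclid_dvdM //.
  by move=> /orP[//|]; rewrite dvdn2 oddH.
pose K2 := 'O_2(K)%G; pose K1 := 'O_2^'(K)%G.
have dK : K2 \x K1 = K := nilpotent_pcoreC 2 (abelian_nil (cyclic_abelian cycK)).
have nsK2 : K2 <| G := char_normal_trans (pcore_char _ _) nsKG.
have nsK1 : K1 <| G := char_normal_trans (pcore_char _ _) nsKG.
have p2 : 2.-group K2 := pcore_pgroup _ _.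
have p1 : 2^'.-group K1 := pcore_pgroup _ _.
have evK2 : 2 %| #|K2|.
  move: evK; rewrite -(dprod_card dK) Euclid_dvdM // => /orP [//|].
  by move: p1; rewrite /pgroup p'natE // => /negbTE ->.
have [a cK2] := p_natP p2.
have apos : (0 < a)%N by case: a cK2 evK2 => // ->.
have sK2K : K2 \subset K := pcore_sub _ _.
have sK1K : K1 \subset K := pcore_sub _ _.
have cycK2 : cyclic K2 := cyclicS sK2K cycK.
have cHK2 : H \subset 'C(K2).
  apply: cent_coprime_aut => //; first exact: subset_trans sHG (normal_norm nsK2).
  by rewrite cK2 totient_pfactor // mul1n coprimeXr // coprimen2.
have tiK2H : K2 :&: H = 1.
  by apply/trivgP; rewrite -tiKH setSI.
have dH' : K2 \x H = K2 <*> H := dprodEY cHK2 tiK2H.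
have sJG : K2 <*> H \subset G by rewrite join_subG (normal_sub nsK2) sHG.
have mulG : K1 * (K2 <*> H) = G.
  by rewrite cent_joinEr // mulgA (dprodWC dK) mulKH.
have tiI : K1 :&: (K2 <*> H) = 1.
  apply/eqP; rewrite trivg_card1.
  have := mul_cardG K1 (K2 <*> H)%G.
  rewrite /= mulG -(dprod_card dH') -(sdprod_card defG) -(dprod_card dK).
  rewrite mulnCA mulnA [(_ * #|K1|)%N]mulnC -{1}(muln1 (_ * _ * _)%N) => /eqP.
  by rewrite eqn_pmul2l ?muln_gt0 ?cardG_gt0 // eq_sym.
exists K1, (K2 <*> H)%G; split.
- by rewrite sdprodE // (subset_trans sJG (normal_norm nsK1)).
- exact: cyclicS sK1K cycK.
- by rewrite /= (cyclic_dprod dH') // cK2 coprimeXl // coprime2n.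
- exact: dvdn_trans evK2 (cardSg (joing_subl _ _)).
Qed.
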